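(* If $P$ is an interval order, then the set $\mathcal{J}^{\neg\downarrow}(P)$ of non-principal ideals of $P$ is a chain under inclusion.
   Context: A poset $P$ is an interval order if it is isomorphic to a set of nonempty intervals of some chain $C$, ordered by $I<J$ iff $x<y$ for every $x\in I$ and every $y\in J$. An ideal of $P$ is a nonempty initial segment of $P$ (closed downward) which is up-directed (any two elements have an upper bound in it); it is principal if it has a largest element. *)

(* Defs.v *)
From Stdlib Require Import Classical.

Definition is_partial_order {T : Type} (le : T -> T -> Prop) : Prop :=
  (forall x, le x x) /\
  (forall x y, le x y -> le y x -> x = y) /\
  (forall x y z, le x y -> le y z -> le x z).

Definition is_total_order {C : Type} (le : C -> C -> Prop) : Prop :=
  is_partial_order le /\ (forall x y, le x y \/ le y x).

Definition strict {T : Type} (le : T -> T -> Prop) (x y : T) : Prop :=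
  le x y /\ x <> y.

Definition is_interval {C : Type} (leC : C -> C -> Prop) (I : C -> Prop) : Prop :=
  (exists c, I c) /\
  (forall a b c, I a -> I c -> leC a b -> leC b c -> I b).

Definition interval_lt {C : Type} (leC : C -> C -> Prop) (I J : C -> Prop) : Prop :=
  forall x y, I x -> J y -> strict leC x y.

(* P is an interval order: isomorphic to a set of nonempty intervals of some
   chain, i.e. there is an injective map f into nonempty intervals of a chain
   with x < y in P iff f x < f y (an isomorphism onto its image). *)
Definition interval_order {T : Type} (le : T -> T -> Prop) : Prop :=
  exists (C : Type) (leC : C -> C -> Prop) (f : T -> (C -> Prop)),
    is_total_order leC /\
    (forall x, is_interval leC (f x)) /\
    (forall x y, f x = f y -> x = y) /\
    (forall x y, strict le x y <-> interval_lt leC (f x) (f y)).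

Definition is_ideal {T : Type} (le : T -> T -> Prop) (I : T -> Prop) : Prop :=
  (exists x, I x) /\
  (forall x y, le x y -> I y -> I x) /\
  (forall x y, I x -> I y -> exists z, I z /\ le x z /\ le y z).

Definition is_principal {T : Type} (le : T -> T -> Prop) (I : T -> Prop) : Prop :=
  exists m, I m /\ forall x, I x -> le x m.

Definition is_nonprincipal_ideal {T : Type} (le : T -> T -> Prop) (I : T -> Prop) : Prop :=
  is_ideal le I /\ ~ is_principal le I.

Definition subset {T : Type} (A B : T -> Prop) : Prop := forall x, A x -> B x.

(* Main.v *)
Require Import Defs.
From Stdlib Require Import Classical.

Lemma np_succ {T : Type} (le : T -> T -> Prop) (I : T -> Prop) :
  is_partial_order le -> is_nonprincipal_ideal le I ->
  forall x, I x -> exists y, I y /\ strict le x y.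
Proof.
  intros [Hr [Ha Ht]] [[Hne [Hd Hdir]] Hnp] x Hx.
  destruct (classic (exists z, I z /\ ~ le z x)) as [[z [Hz Hzx]]|Hno].
  - destruct (Hdir x z Hx Hz) as [w [Hw [Hxw Hzw]]].
    exists w; split; [exact Hw|split; [exact Hxw|]].
    intro E; subst w; exact (Hzx Hzw).
  - exfalso; apply Hnp; exists x; split; [exact Hx|].
    intros y Hy; apply NNPP; intro Hn; apply Hno; exists y; auto.
Qed.

Lemma not_ilt {C : Type} (leC : C -> C -> Prop) (A B : C -> Prop) :
  ~ interval_lt leC A B -> exists x y, A x /\ B y /\ ~ strict leC x y.
Proof.
  intro H; apply NNPP; intro Hn; apply H; intros x y Hx Hy.
  apply NNPP; intro Hs; apply Hn; exists x, y; auto.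
Qed.

Theorem lemma1p4 (T : Type) (le : T -> T -> Prop) :
  is_partial_order le -> interval_order le ->
  forall I J : T -> Prop,
    is_nonprincipal_ideal le I -> is_nonprincipal_ideal le J ->
    subset I J \/ subset J I.
Proof.
  intros Hpo [C [leC [f [[[Cr [Ca Ct]] Ctot] [Hint [Hinj Hiff]]]]]] I J HI HJ.
  destruct (classic (subset I J)) as [H1|H1]; [left; exact H1|].
  destruct (classic (subset J I)) as [H2|H2]; [right; exact H2|].
  exfalso.
  destruct (not_all_ex_not _ _ H1) as [a Ha].
  destruct (not_all_ex_not _ _ H2) as [b Hb].
  apply imply_to_and in Ha as [HaI HaJ].
  apply imply_to_and in Hb as [HbJ HbI].
  destruct (np_succ le I Hpo HI a HaI) as [a' [Ha'I Haa']].
  destruct (np_succ le J Hpo HJ b HbJ) as [b' [Hb'J Hbb']].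
  destruct HI as [[_ [HdI _]] _]. destruct HJ as [[_ [HdJ _]] _].
  assert (N1 : ~ interval_lt leC (f a) (f b')).
  { intro Hl; apply Hiff in Hl; apply HaJ; exact (HdJ _ _ (proj1 Hl) Hb'J). }
  assert (N2 : ~ interval_lt leC (f b) (f a')).
  { intro Hl; apply Hiff in Hl; apply HbI; exact (HdI _ _ (proj1 Hl) Ha'I). }
  apply Hiff in Haa'. apply Hiff in Hbb'.
  destruct (not_ilt _ _ _ N1) as [x [y [Hx [Hy Hxy]]]].
  destruct (not_ilt _ _ _ N2) as [u [v [Hu [Hv Huv]]]].
  assert (Lyx : leC y x).
  { destruct (Ctot x y) as [h|h]; [|exact h].
    destruct (classic (x = y)) as [e|e]; [subst; apply Cr|].
    exfalso; apply Hxy; split; assumption. }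
  assert (Lvu : leC v u).
  { destruct (Ctot u v) as [h|h]; [|exact h].
    destruct (classic (u = v)) as [e|e]; [subst; apply Cr|].
    exfalso; apply Huv; split; assumption. }
  destruct (Haa' x v Hx Hv) as [Lxv _].
  destruct (Hbb' u y Hu Hy) as [Luy Nuy].
  apply Nuy. apply Ca; [exact Luy|].
  apply (Ct _ _ _ Lyx), (Ct _ _ _ Lxv), Lvu.
Qed.
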